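(* Let $(\mathcal{M},d)$ be an NPC space, $\alpha\in[1,2]$, $P\in\mathcal{P}_\alpha(\mathcal{M})$, and let $x^*$ be a minimizer of $F_\alpha$ (assumed to exist). For $x\in\mathcal{M}\setminus\{x^*\}$, if $b_\alpha(x)>0$ then $$ d(x,x^* )^\alpha\le\frac1{b_\alpha(x)}\int_{\mathcal{M}}\left(d(x,y)^\alpha-d(x^*,y)^\alpha\right)dP(y). $$ Consequently, if $B_\alpha:=\inf_{x\in\mathcal{M}\setminus\{x^*\}}b_\alpha(x)>0$, then for all $x\in\mathcal{M}$, $d(x,x^* )^\alpha\le B_\alpha^{-1}\int(d(x,y)^\alpha-d(x^*,y)^\alpha)\,dP(y)$.
   Context: NPC space: a Polish space $(\mathcal{M},d)$ such that for any $x_0,x_1$ there is $y$ with $d(z,y)^2\le\frac12d(z,x_0)^2+\frac12d(z,x_1)^2-\frac14d(x_0,x_1)^2$ for all $z$; such spaces are uniquely geodesic (geodesic: $\gamma:[0,1]\to\mathcal{M}$ with $d(\gamma_s,\gamma_t)=|s-t|d(\gamma_0,\gamma_1)$). $\mathcal{P}_\alpha(\mathcal{M})$ is the set of Borel probability measures $P$ with $\int d(x,y)^\alpha dP(y)<\infty$ for some $x$. $F_\alpha(x)=\int d(x,y)^\alpha dP(y)$. For $x\ne x^*$, $\gamma^x$ is the geodesic with $\gamma^x_0=x^*$, $\gamma^x_1=x$, and $$ b_\alpha(x)=\sup_{t\in(0,1]}\frac{F_\alpha(\gamma^x_t)-\{t^{\alpha/2}+(1-t)^{\alpha/2}\}F_\alpha(x^*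 )}{t^{\alpha/2}d(x,x^* )^\alpha}. $$ *)

(* Defs.v *)
From HB Require Import structures.
From mathcomp Require Import all_boot all_order all_algebra.
From mathcomp Require Import all_classical all_reals all_analysis.
Set Implicit Arguments. Unset Strict Implicit. Unset Printing Implicit Defensive.
Import Order.TTheory GRing.Theory Num.Theory.
Local Open Scope classical_set_scope.
Local Open Scope ring_scope.

Section Defs.
Variables (R : realType) (M : Type) (dist : M -> M -> R).

Definition is_metric : Prop :=
  [/\ forall x y, dist x y = 0 <-> x = y,
      forall x y, dist x y = dist y x &
      forall x y z, dist x z <= dist x y + dist y z].

Definition dist_cauchy (u : nat -> M) : Prop :=
  forall e : R, 0 < e -> exists N, forall m n, (N <= m)%N -> (N <= n)%N ->
    dist (u m) (u n) < e.

Definition dist_converges (u : nat -> M) (l : M) : Prop :=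
  forall e : R, 0 < e -> exists N, forall n, (N <= n)%N -> dist (u n) l < e.

Definition dist_complete : Prop :=
  forall u, dist_cauchy u -> exists l, dist_converges u l.

Definition dist_separable : Prop :=
  exists D : nat -> M, forall x (e : R), 0 < e -> exists n, dist x (D n) < e.

Definition polish : Prop := [/\ is_metric, dist_complete & dist_separable].

Definition npc_ineq : Prop :=
  forall x0 x1, exists y, forall z,
    dist z y ^+ 2 <= 2^-1 * dist z x0 ^+ 2 + 2^-1 * dist z x1 ^+ 2
                     - 4^-1 * dist x0 x1 ^+ 2.

Definition NPC_space : Prop := polish /\ npc_ineq.

Definition dist_open (A : set M) : Prop :=
  forall x, A x -> exists e : R, 0 < e /\ [set y | dist x y < e] `<=` A.

(* geodesic gamma : [0,1] -> M (values outside [0,1] irrelevant) *)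
Definition is_geodesic (gamma : R -> M) : Prop :=
  forall s t : R, 0 <= s <= 1 -> 0 <= t <= 1 ->
    dist (gamma s) (gamma t) = `|s - t| * dist (gamma 0) (gamma 1).
End Defs.

Section Meas.
Context {R : realType} {disp : measure_display} {M : measurableType disp}.
Variables (dist : M -> M -> R) (P : probability M R) (alpha : R).

Definition borel_of_dist : Prop :=
  (measurable : set (set M)) = <<s [set A | dist_open dist A] >>.

Definition in_P_alpha : Prop :=
  exists x, (\int[P]_y ((dist x y) `^ alpha)%:E < +oo)%E.

(* F_alpha(x) = int d(x,y)^alpha dP(y)  (finite when P in P_alpha) *)
Definition F_alpha (x : M) : R := fine (\int[P]_y ((dist x y) `^ alpha)%:E).

Definition b_ratio (xs x : M) (gamma : R -> M) (t : R) : R :=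
  (F_alpha (gamma t) - (t `^ (alpha / 2) + (1 - t) `^ (alpha / 2)) * F_alpha xs)
  / (t `^ (alpha / 2) * (dist x xs) `^ alpha).

(* b_alpha(x): supremum over t in (0,1] along the geodesic from xs to x
   (the geodesic is unique in an NPC space; we range over all of them) *)
Definition b_alpha (xs x : M) : \bar R :=
  ereal_sup [set v : \bar R | exists (gamma : R -> M) (t : R),
     [/\ is_geodesic dist gamma, gamma 0 = xs, gamma 1 = x, 0 < t <= 1 &
        v = (b_ratio xs x gamma t)%:E]].

Definition B_alpha (xs : M) : \bar R :=
  ereal_inf [set v : \bar R | exists x, x <> xs /\ v = b_alpha xs x].
End Meas.

(* Main.v *)
Require Import Defs.
From HB Require Import structures.
From mathcomp Require Import all_boot all_order all_algebra.
From mathcomp Require Import all_classical all_reals all_analysis.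
From mathcomp Require Import measurable_realfun.
From mathcomp Require Import ring lra zify.
Import Order.TTheory GRing.Theory Num.Theory.
Local Open Scope classical_set_scope.
Local Open Scope ring_scope.
Lemma dist_ge0 (R : realType) (M : Type) (dist : M -> M -> R) :
  is_metric dist -> forall x y, 0 <= dist x y.
Proof.
case=> h0 hs ht x y.
have := ht x y x; rewrite (proj2 (h0 x x) erefl) (hs y x) => h; lra.
Qed.

Lemma geod_ineq (R : realType) (M : Type) (dist : M -> M -> R) (g : R -> M) y t :
  is_metric dist -> npc_ineq dist -> is_geodesic dist g -> 0 <= t <= 1 ->
  dist y (g t) ^+ 2 <= (1 - t) * dist y (g 0) ^+ 2 + t * dist y (g 1) ^+ 2
     - t * (1 - t) * dist (g 0) (g 1) ^+ 2.
Proof.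
move=> hm hnpc hg ht.
have d0 := @dist_ge0 R M dist hm.
case: hm => h0 hs htr.
set D := dist (g 0) (g 1); set a := dist y (g 0); set b := dist y (g 1).
pose q (t : R) := (1 - t) * a ^+ 2 + t * b ^+ 2 - t * (1 - t) * D ^+ 2.
pose psi (t : R) := dist y (g t) ^+ 2 - q t.
suff : psi t <= 0 by rewrite /psi /q; lra.
have hD : 0 <= D by apply: d0.
have mid : forall s u, 0 <= s <= 1 -> 0 <= u <= 1 ->
    psi ((s + u) / 2) <= 2^-1 * psi s + 2^-1 * psi u.
  move=> s u hs1 hu1.
  set m := (s + u) / 2.
  have hm1 : 0 <= m <= 1 by rewrite /m; apply/andP; split; lra.
  have [y0 Hy0] := hnpc (g s) (g u).
  have e1 := hg m s hm1 hs1; have e2 := hg m u hm1 hu1; have e3 := hg s u hs1 hu1.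
  have := Hy0 (g m); rewrite e1 e2 e3 !exprMn !real_normK ?num_real //.
  have -> : 2^-1 * ((m - s) ^+ 2 * D ^+ 2) + 2^-1 * ((m - u) ^+ 2 * D ^+ 2) -
            4^-1 * ((s - u) ^+ 2 * D ^+ 2) = 0 by rewrite /m; field.
  move=> hle.
  have : dist (g m) y0 ^+ 2 == 0.
    by rewrite eq_le hle sqr_ge0.
  rewrite sqrf_eq0 => /eqP /h0 em.
  have := Hy0 y; rewrite -em e3 exprMn real_normK ?num_real // => hy.
  rewrite /psi /q.
  have -> : (1 - m) * a ^+ 2 + m * b ^+ 2 - m * (1 - m) * D ^+ 2 =
     2^-1 * ((1 - s) * a ^+ 2 + s * b ^+ 2 - s * (1 - s) * D ^+ 2)
   + 2^-1 * ((1 - u) * a ^+ 2 + u * b ^+ 2 - u * (1 - u) * D ^+ 2)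
   - 4^-1 * ((s - u) ^+ 2 * D ^+ 2) by rewrite /m; field.
  move: hy.
  move: ((1 - s) * a ^+ 2 + s * b ^+ 2 - s * (1 - s) * D ^+ 2) => qs.
  move: ((1 - u) * a ^+ 2 + u * b ^+ 2 - u * (1 - u) * D ^+ 2) => qu.
  move: ((s - u) ^+ 2 * D ^+ 2) => w.
  move: (dist y (g m) ^+ 2) (dist y (g s) ^+ 2) (dist y (g u) ^+ 2) => d1 d2 d3.
  lra.
have psi0 : psi 0 = 0 by rewrite /psi /q -/a; ring.
have psi1 : psi 1 = 0 by rewrite /psi /q -/b; ring.
have p2n : forall n : nat, 0 < 2 ^+ n :> R by move=> n; apply: exprn_gt0.
have unit01 : forall n j : nat, (j <= 2 ^ n)%N -> 0 <= (j%:R / 2 ^+ n : R) <= 1.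
  move=> n j hj; apply/andP; split; first by apply: divr_ge0 => //; apply: ltW.
  rewrite ler_pdivrMr // mul1r -natrX ler_nat //.
have dy : forall n k, (k <= 2 ^ n)%N -> psi (k%:R / 2 ^+ n) <= 0.
  elim=> [|n IH] k hk.
    rewrite expr0 divr1.
    by case: k hk => [|[|//]] _; rewrite ?psi0 ?psi1.
  rewrite -(odd_double_half k) in hk *.
  set j := k./2 in hk *.
  case: (odd k) hk => /= hk.
    have hj : (j.+1 <= 2 ^ n)%N.
      by rewrite expnS in hk; rewrite -muln2 in hk; lia.
    have hj' : (j <= 2 ^ n)%N by lia.
    have -> : (1 + j.*2)%:R / 2 ^+ n.+1 = (j%:R / 2 ^+ n + j.+1%:R / 2 ^+ n) / 2 :> R.
      rewrite -!mul2n natrD natrM -(addn1 j) natrD exprS.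
      field. by rewrite gt_eqF ?p2n.
    have := mid _ _ (unit01 _ _ hj') (unit01 _ _ hj).
    have := IH _ hj'; have := IH _ hj. lra.
  have hj : (j <= 2 ^ n)%N by rewrite expnS -muln2 in hk; lia.
  have -> : (0 + j.*2)%:R / 2 ^+ n.+1 = j%:R / 2 ^+ n :> R.
    rewrite add0n -!mul2n natrM exprS. field. by rewrite gt_eqF ?p2n.
  exact: IH.
set L := 2 * D * (a + D) + `|b ^+ 2 - a ^+ 2 - D ^+ 2|.
have L0 : 0 <= L by rewrite /L; apply: addr_ge0 => //; apply: mulr_ge0 => //;
  [lra | apply: addr_ge0 => //; apply: d0].
have t01 := ht.
have h01 : 0 <= (0:R) <= 1 by apply/andP; split; lra.
have lip : forall s, 0 <= s <= t -> psi t <= psi s + L * (t - s).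
  move=> s /andP[s0 st].
  have hs1 : 0 <= s <= 1 by apply/andP; split; lra.
  have e := hg s t hs1 ht; rewrite -/D in e.
  rewrite distrC ger0_norm in e; last by lra.
  have tri := htr y (g s) (g t); rewrite e in tri.
  have bt : dist y (g t) <= a + D.
    have := htr y (g 0) (g t); rewrite (hg 0 t h01 ht) -/D.
    rewrite sub0r normrN ger0_norm; last by lra.
    rewrite -/a => h; have : t * D <= D by rewrite ler_piMl //; lra.
    lra.
  have bs : dist y (g s) <= a + D.
    have := htr y (g 0) (g s); rewrite (hg 0 s h01 hs1) -/D.
    rewrite sub0r normrN ger0_norm; last by lra.
    rewrite -/a => h; have : s * D <= D by rewrite ler_piMl //; lra.
    lra.
  have dt0 := d0 y (g t); have ds0 := d0 y (g s).
  have h1 : dist y (g t) ^+ 2 - dist y (g s) ^+ 2 <= (t - s) * D * (2 * (a + D)).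
    move: tri bt bs dt0 ds0; move: (dist y (g t)) (dist y (g s)) => dt ds.
    move=> tri bt bs dt0 ds0.
    have a0 : 0 <= a by apply: d0.
    have tsD : 0 <= (t - s) * D by apply: mulr_ge0 => //; lra.
    have hR : 0 <= (t - s) * D * (2 * (a + D)) by apply: mulr_ge0 => //; lra.
    case: (leP dt ds) => hd.
      have : dt ^+ 2 <= ds ^+ 2 by rewrite ler_sqr ?nnegrE.
      lra.
    have -> : dt ^+ 2 - ds ^+ 2 = (dt - ds) * (dt + ds) by ring.
    apply: (le_trans (y := (t - s) * D * (dt + ds))).
      by apply: ler_wpM2r; lra.
    by apply: ler_wpM2l => //; lra.
  have h2 : - (q t - q s) <= (t - s) * `|b ^+ 2 - a ^+ 2 - D ^+ 2|.
    have hc := ler_norm (- (b ^+ 2 - a ^+ 2 - D ^+ 2)); rewrite normrN in hc.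
    have hts : s ^+ 2 <= t ^+ 2 by rewrite ler_sqr ?nnegrE //; lra.
    have : q t - q s = (t - s) * (b ^+ 2 - a ^+ 2 - D ^+ 2) + (t ^+ 2 - s ^+ 2) * D ^+ 2
      by rewrite /q; ring.
    move=> ->; move: hc hts; move: (b ^+ 2 - a ^+ 2 - D ^+ 2) `|b ^+ 2 - a ^+ 2 - D ^+ 2| => c ac.
    have := sqr_ge0 D; move: (D ^+ 2) => D2 *; nra.
  rewrite /psi /L; move: h1 h2; rewrite /q; nra.
rewrite leNgt; apply/negP => hp.
set N := Num.Def.trunc (L / psi t).
have hN := @truncn_itv R (L / psi t) (divr_ge0 L0 (ltW hp)).
have h2N : (N.+1 <= 2 ^ N)%N by apply: ltn_expl.
have hLN : L < psi t * 2 ^+ N.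
  have : L / psi t < 2 ^+ N.
    case/andP: hN => _ hN; apply: (lt_le_trans hN).
    by rewrite -natrX ler_nat.
  by rewrite ltr_pdivrMr // mulrC.
set k := Num.Def.trunc (t * 2 ^+ N).
have hk := @truncn_itv R (t * 2 ^+ N) (mulr_ge0 (proj1 (andP t01)) (ltW (p2n N))).
have kle : (k <= 2 ^ N)%N.
  rewrite -(ler_nat R) natrX; apply: (le_trans (proj1 (andP hk))).
  case/andP: (t01) => _ t1.
  by rewrite ler_piMl // ltW.
have hsk := unit01 _ _ kle.
have sle : k%:R / 2 ^+ N <= t by rewrite ler_pdivrMr //; case/andP: hk.
have tsle : t - k%:R / 2 ^+ N <= 1 / 2 ^+ N.
  have h2p := p2n N.
  have h : t * 2 ^+ N <= k%:R + 1 by case/andP: hk => _ h; rewrite natr1; exact: ltW.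
  rewrite -(ler_pM2r h2p) mulrBl divfK ?gt_eqF // div1r mulVf ?gt_eqF //; lra.
have hl : psi t <= psi (k%:R / 2 ^+ N) + L * (t - k%:R / 2 ^+ N).
  by apply: lip; apply/andP; split => //; case/andP: hsk.
have hd := dy N k kle.
have h3 : L * (t - k%:R / 2 ^+ N) <= L * (1 / 2 ^+ N) by apply: ler_wpM2l.
have h4 : L * (1 / 2 ^+ N) < psi t by rewrite mul1r ltr_pdivrMr.
lra.
Qed.

Lemma powR_subadd (R : realType) (u v p : R) :
  0 <= u -> 0 <= v -> 0 < p <= 1 -> (u + v) `^ p <= u `^ p + v `^ p.
Proof.
move=> u0 v0 /andP[p0 p1].
have [w0|wp] := eqVneq (u + v) 0.
  have u00 : u = 0 by lra.
  have v00 : v = 0 by lra.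
  by rewrite w0 u00 v00 powR0 ?gt_eqF // addr0.
have wgt : 0 < u + v by rewrite lt_def wp /=; lra.
have key : forall z, 0 <= z -> z <= u + v -> (u + v) `^ p * (z / (u + v)) <= z `^ p.
  move=> z z0 zw.
  have -> : z `^ p = (u + v) `^ p * (z / (u + v)) `^ p.
    by rewrite -powRM ?(ltW wgt) ?divr_ge0 ?(ltW wgt) // mulrCA divff ?mulr1 // gt_eqF.
  apply: ler_wpM2l; first exact: powR_ge0.
  have [->|zn] := eqVneq z 0; first by rewrite mul0r powR_ge0.
  apply: ger1_powR => //; apply/andP; split.
    by apply: divr_gt0 => //; rewrite lt_def zn.
  by rewrite ler_pdivrMr // mul1r.
have h1 := key u u0 ltac:(lra); have h2 := key v v0 ltac:(lra).
have e : (u + v) `^ p = (u + v) `^ p * (u / (u + v)) + (u + v) `^ p * (v / (u + v)).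
  by rewrite -mulrDr -mulrDl divff ?gt_eqF // mulr1.
move: h1 h2 e; move: ((u + v) `^ p * (u / (u + v))) ((u + v) `^ p * (v / (u + v))) => A B.
move: ((u + v) `^ p) => C.
lra.
Qed.

Lemma powR_sq (R : realType) (z alpha : R) : 0 <= z ->
  z `^ alpha = (z ^+ 2) `^ (alpha / 2).
Proof.
move=> z0; rewrite -(powR_mulrn 2 z0) -powRrM; congr (powR z _).
by rewrite mulrC divfK.
Qed.

Lemma pow_point (R : realType) (M : Type) (dist : M -> M -> R) (g : R -> M) y t alpha :
  is_metric dist -> npc_ineq dist -> is_geodesic dist g -> 0 <= t <= 1 ->
  1 <= alpha <= 2 ->
  dist (g t) y `^ alpha <= t `^ (alpha / 2) * dist (g 1) y `^ alpha
                         + (1 - t) `^ (alpha / 2) * dist (g 0) y `^ alpha.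
Proof.
move=> hm hnpc hg ht ha.
have d0 := @dist_ge0 R M dist hm.
have hs : forall x y, dist x y = dist y x by case: hm.
have gi := @geod_ineq R M dist g y t hm hnpc hg ht.
rewrite !(hs _ y) !(@powR_sq R _ alpha (d0 _ _)).
set p := alpha / 2.
have p01 : 0 < p <= 1 by rewrite /p; apply/andP; split; lra.
have hp0 : 0 <= p by lra.
case/andP: ht => t0 t1.
have hD : 0 <= t * (1 - t) * dist (g 0) (g 1) ^+ 2.
  by apply: mulr_ge0; [apply: mulr_ge0; lra | apply: sqr_ge0].
have s0 := sqr_ge0 (dist y (g 0)); have s1 := sqr_ge0 (dist y (g 1)).
have le1 : dist y (g t) ^+ 2 <= (1 - t) * dist y (g 0) ^+ 2 + t * dist y (g 1) ^+ 2.
  move: gi hD; move: (t * (1 - t) * dist (g 0) (g 1) ^+ 2) => c; lra.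
have u0 : 0 <= (1 - t) * dist y (g 0) ^+ 2 by apply: mulr_ge0 => //; lra.
have v0 : 0 <= t * dist y (g 1) ^+ 2 by apply: mulr_ge0 => //; lra.
apply: (le_trans (ge0_ler_powR hp0 _ _ le1)).
- by rewrite nnegrE sqr_ge0.
- by rewrite nnegrE; apply: addr_ge0.
apply: (le_trans (@powR_subadd R _ _ _ u0 v0 p01)).
rewrite !powRM //; lra.
Qed.

Lemma dist_meas (R : realType) (disp : measure_display) (M : measurableType disp)
  (dist : M -> M -> R) :
  is_metric dist -> borel_of_dist dist -> forall x, measurable_fun setT (dist x).
Proof.
move=> [h0 hs htr] hB x.
apply: (measurability _ (RGenOInfty.measurableE R)) => //.
move=> _ [_ [a ->] <-]; rewrite setTI.
rewrite hB; apply: sub_sigma_algebra.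
move=> y /=; rewrite in_itv /= andbT => hy.
exists (dist x y - a); split; first by rewrite subr_gt0.
move=> z /= hz; rewrite in_itv /= andbT.
have := htr x z y; rewrite (hs z y); lra.
Qed.

Lemma pow_tri (R : realType) (a b alpha : R) : 0 <= a -> 0 <= b -> 0 <= alpha ->
  (a + b) `^ alpha <= 2 `^ alpha * (a `^ alpha + b `^ alpha).
Proof.
move=> a0 b0 al0.
have h2 := powR_ge0 2 alpha; have ha := powR_ge0 a alpha; have hb := powR_ge0 b alpha.
have [ab|ba] := leP a b.
  apply: (le_trans (y := (2 * b) `^ alpha)).
    by apply: ge0_ler_powR; rewrite ?nnegrE //; [apply: addr_ge0 | apply: mulr_ge0 | lra].
  rewrite powRM //; apply: ler_wpM2l => //; lra.
apply: (le_trans (y := (2 * a) `^ alpha)).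
  by apply: ge0_ler_powR; rewrite ?nnegrE //; [apply: addr_ge0 | apply: mulr_ge0 | lra].
rewrite powRM //; apply: ler_wpM2l => //; lra.
Qed.

Lemma integrable_dist (R : realType) (disp : measure_display) (M : measurableType disp)
  (dist : M -> M -> R) (P : probability M R) (alpha : R) :
  is_metric dist -> borel_of_dist dist -> 0 <= alpha ->
  in_P_alpha dist P alpha ->
  forall z, P.-integrable setT (fun y => (dist z y `^ alpha)%:E).
Proof.
move=> hm hB al0 [x0 hx0] z.
have d0 := @dist_ge0 R M dist hm.
have mf : forall x, measurable_fun setT (fun y => dist x y `^ alpha).
  move=> x; exact: (measurableT_comp (measurable_powR alpha) (@dist_meas _ _ _ _ hm hB x)).
have ix0 : P.-integrable setT (fun y => (dist x0 y `^ alpha)%:E).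
  apply/integrableP; split; first exact/measurable_EFinP.
  rewrite (eq_integral (fun y => (dist x0 y `^ alpha)%:E)) //.
  by move=> y _; rewrite gee0_abs // lee_fin powR_ge0.
pose g := fun y => ((2 `^ alpha)%:E *
    ((EFin \o cst (dist z x0 `^ alpha)%R) \+ (fun y => (dist x0 y `^ alpha)%:E)) y)%E.
have ig : P.-integrable setT g.
  apply: integrableZl => //; apply: integrableD => //.
  exact: finite_measure_integrable_cst.
apply: (le_integrable _ _ _ ig) => //.
- exact/measurable_EFinP.
- move=> y _; rewrite /g /= lee_fin !ger0_norm ?powR_ge0 //; last first.
    by apply: mulr_ge0; rewrite ?addr_ge0 ?powR_ge0.
  apply: (le_trans _ (@pow_tri R _ _ _ (d0 z x0) (d0 x0 y) al0)).
  apply: ge0_ler_powR; rewrite ?nnegrE ?addr_ge0 ?d0 //.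
  by case: hm => _ _ ->.
Qed.

Theorem proposition4p2 (R : realType) (disp : measure_display)
  (M : measurableType disp) (dist : M -> M -> R)
  (P : probability M R) (alpha : R) (xs : M) :
  NPC_space dist ->
  borel_of_dist dist ->
  1 <= alpha <= 2 ->
  in_P_alpha dist P alpha ->
  (forall z, F_alpha dist P alpha xs <= F_alpha dist P alpha z) ->
  (forall x, x <> xs -> (0 < b_alpha dist P alpha xs x)%E ->
     (((dist x xs) `^ alpha)%:E <=
        ((fine (b_alpha dist P alpha xs x))^-1)%:E *
        \int[P]_y ((dist x y) `^ alpha - (dist xs y) `^ alpha)%:E)%E)
  /\
  ((0 < B_alpha dist P alpha xs)%E ->
   forall x, (((dist x xs) `^ alpha)%:E <=
        ((fine (B_alpha dist P alpha xs))^-1)%:E *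
        \int[P]_y ((dist x y) `^ alpha - (dist xs y) `^ alpha)%:E)%E).
Proof.
move=> [[hm _ _] hn] hB ha hP _.
have al0 : 0 <= alpha by case/andP: ha => h _; lra.
have d0 := @dist_ge0 R M dist hm.
have h0 : forall x y, dist x y = 0 <-> x = y by case: hm.
have ig := @integrable_dist R disp M dist P alpha hm hB al0 hP.
set F := F_alpha dist P alpha.
have IF : forall z, (\int[P]_y (dist z y `^ alpha)%:E)%E = (F z)%:E.
  by move=> z; rewrite /F /F_alpha fineK // integrable_fin_num.
have Idiff : forall x, (\int[P]_y ((dist x y `^ alpha - dist xs y `^ alpha)%:E))%E
                       = (F x - F xs)%:E.
  move=> x; rewrite (eq_integral (fun y => (dist x y `^ alpha)%:E - (dist xs y `^ alpha)%:E)%E);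
    last by move=> y _; rewrite EFinB.
  rewrite integralB_EFin //; [|exact: ig|exact: ig]. by rewrite (IF x) (IF xs) EFinB.
have dpos : forall x, x <> xs -> 0 < dist x xs `^ alpha.
  move=> x hx; apply: powR_gt0; rewrite lt_def d0 andbT.
  by apply/eqP => /h0.
have key : forall x, x <> xs ->
    (b_alpha dist P alpha xs x <= ((F x - F xs) / dist x xs `^ alpha)%:E)%E.
  move=> x hx; apply: ge_ereal_sup => _ [g [t [hg g0 g1 ht ->]]].
  rewrite lee_fin /b_ratio -/F.
  have dp := dpos x hx.
  have t01 : 0 <= t <= 1 by case/andP: ht => h1 h2; apply/andP; split => //; lra.
  have tp : 0 < t `^ (alpha / 2) by apply: powR_gt0; case/andP: ht.
  have hF : F (g t) <= t `^ (alpha / 2) * F x + (1 - t) `^ (alpha / 2) * F xs.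
    rewrite -lee_fin EFinD !EFinM -(IF (g t)) -(IF x) -(IF xs).
    rewrite -(integralZl measurableT (ig x)) -(integralZl measurableT (ig xs)).
    rewrite -(integralD measurableT); [|exact: integrableZl (ig x)|exact: integrableZl (ig xs)].
    apply: le_integral => //.
      by apply: integrableD => //; apply: integrableZl.
    move=> y _; rewrite -!EFinM -EFinD lee_fin.
    have := @pow_point R M dist g y t alpha hm hn hg t01 ha.
    by rewrite g0 g1.
  rewrite ler_pdivrMr ?mulr_gt0 //.
  have -> : (F x - F xs) / dist x xs `^ alpha * (t `^ (alpha / 2) * dist x xs `^ alpha)
            = t `^ (alpha / 2) * (F x - F xs).
    by field; rewrite gt_eqF.
  move: hF; move: (t `^ (alpha / 2)) ((1 - t) `^ (alpha / 2)) => A B.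
  move=> *; lra.
have fin : forall x r, x <> xs -> 0 < r -> (r%:E <= ((F x - F xs) / dist x xs `^ alpha)%:E)%E ->
   ((dist x xs `^ alpha)%:E <= (r^-1)%:E *
      \int[P]_y ((dist x y `^ alpha - dist xs y `^ alpha)%:E))%E.
  move=> x r hx hr; rewrite Idiff -EFinM !lee_fin => hk.
  have dp := dpos x hx.
  rewrite -(ler_pM2l hr) mulrA mulfV ?gt_eqF // mul1r.
  by rewrite ler_pdivlMr // mulrC in hk.
split.
  move=> x hx; have hk := key x hx; move: hk.
  case: (b_alpha dist P alpha xs x) => [r| |] //= hk hb.
  by apply: fin => //; rewrite -lte_fin.
move=> hB0 x.
have [->|/eqP hx] := eqVneq x xs.
  rewrite Idiff subrr mule0 (proj2 (h0 xs xs) erefl) powR0 //.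
  by apply/eqP => a0; move: ha; rewrite a0; lra.
have hk := key x hx.
have hle : (B_alpha dist P alpha xs <= b_alpha dist P alpha xs x)%E.
  by apply: ereal_inf_lbound; exists x; split.
move: hB0 hle; case: (B_alpha dist P alpha xs) => [r| |] //= hr hle.
  have hr' : 0 < r by rewrite -lte_fin.
  exact: fin hx hr' (le_trans hle hk).
by have := le_trans hle hk.
Qed.
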